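(* Let $b(\lambda)=\frac14\lambda^4+\frac12p\lambda^2+q\lambda$ with $p<0$, $q\in\mathbb{R}$, and $B_\eta(\lambda)=\eta\lambda-b(\lambda)$. Define $\lambda:\mathbb{R}\to\mathbb{R}$ by: for $\eta\neq q$, $\lambda(\eta)$ is the unique point at which $B_\eta$ attains its global maximum (this point lies below $-\sqrt{-p}$ when $\eta<q$ and above $\sqrt{-p}$ when $\eta>q$), and $\lambda(q)=\sqrt{-p}$. Then $\eta\mapsto\lambda(\eta)$ maps $\mathbb{R}$ onto $\mathbb{R}\setminus[-\sqrt{-p},\sqrt{-p})$, and it is (a) differentiable on $\mathbb{R}\setminus\{q\}$, (b) continuous from the right at $\eta=q$, and (c) increasing and injective on $\mathbb{R}$. *)

(* Defs.v *)
From Stdlib Require Import Reals ClassicalEpsilon.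
From Coquelicot Require Import Coquelicot.
Open Scope R_scope.

Definition b (p q x : R) : R := /4 * x ^ 4 + /2 * p * x ^ 2 + q * x.

Definition B (p q eta x : R) : R := eta * x - b p q x.

Definition is_global_max_B (p q eta x : R) : Prop :=
  forall y : R, B p q eta y <= B p q eta x.

Definition lam (p q eta : R) : R :=
  match Req_EM_T eta q with
  | left _ => sqrt (- p)
  | right _ => epsilon (inhabits 0) (fun x => is_global_max_B p q eta x)
  end.

(* Main.v *)
Require Import Defs.
From Stdlib Require Import Reals Lra Psatz ClassicalEpsilon.
From Coquelicot Require Import Coquelicot.
Open Scope R_scope.
Definition hh (p q x : R) := x^3 + p*x + q.

Lemma B_diff p q x y : B p q (hh p q x) x - B p q (hh p q x) y = (x-y)^2/4 * (3*x^2+2*x*y+y^2+2*p).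
Proof. unfold B, b, hh. field. Qed.

Lemma lam_h p q x (hp : p < 0) : x^2 + p > 0 -> lam p q (hh p q x) = x.
Proof.
intros Hx. unfold lam. destruct (Req_EM_T (hh p q x) q) as [E|E].
- exfalso. unfold hh in E. assert (x * (x^2+p) = 0) by lra.
  apply Rmult_integral in H. destruct H as [H|H]; [rewrite H in Hx|]; nra.
- assert (Hm : is_global_max_B p q (hh p q x) x).
  { intro y. pose proof (B_diff p q x y).
    assert (0 <= (x-y)^2/4) by (apply Rmult_le_pos; [apply pow2_ge_0|lra]).
    assert (0 <= 3*x^2+2*x*y+y^2+2*p).
    { replace (3*x^2+2*x*y+y^2+2*p) with (2*(x^2+p) + (x+y)^2) by ring.
      pose proof (pow2_ge_0 (x+y)). lra. }
    assert (0 <= (x-y)^2/4 * (3*x^2+2*x*y+y^2+2*p)) by (apply Rmult_le_pos; auto).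
    lra. }
  pose proof (epsilon_spec (inhabits 0) (fun z => is_global_max_B p q (hh p q x) z) (ex_intro _ x Hm)) as Hz.
  set (z := epsilon _ _) in *. cbv beta in Hz.
  specialize (Hz x). specialize (Hm z). pose proof (B_diff p q x z).
  assert ((x-z)^2/4 * (3*x^2+2*x*z+z^2+2*p) = 0) by lra.
  assert (3*x^2+2*x*z+z^2+2*p > 0).
  { replace (3*x^2+2*x*z+z^2+2*p) with (2*(x^2+p) + (x+z)^2) by ring.
    pose proof (pow2_ge_0 (x+z)). lra. }
  apply Rmult_integral in H0. destruct H0; [|lra].
  assert ((x-z)^2 = 0) by lra. nra.
Qed.

Lemma lam_q p q : lam p q q = sqrt (-p).
Proof. unfold lam. destruct (Req_EM_T q q); [auto|congruence]. Qed.

Lemma pre_pos p q e (hp : p < 0) : q < e -> exists x, sqrt (-p) < x /\ hh p q x = e.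
Proof.
intros He. set (s := sqrt (-p)).
assert (Hs : 0 < s) by (apply sqrt_lt_R0; lra).
assert (Hs2 : s * s = -p) by (apply sqrt_sqrt; lra).
set (M := s + 1 + (e - q)).
destruct (IVT (fun x => hh p q x - e) s M) as [z [[Hz1 Hz2] Hz3]].
- unfold hh. reg.
- unfold M; lra.
- unfold hh. cbv beta. replace (s^3 + p*s) with (s*(s*s+p)) by ring. rewrite Hs2.
  lra.
- unfold hh, M. cbv beta.
  set (c := e - q). assert (0 < c) by (unfold c; lra).
  replace ((s + 1 + c) ^ 3 + p * (s + 1 + c) + q - e) with
   ((s+1+c) * ((1+c)*(2*s+1+c)) - c) by (unfold c; replace p with (-(s*s)) by lra; ring).
  assert (1 <= (1+c)*(2*s+1+c)) by nra.
  assert ((s+1+c) * 1 <= (s+1+c) * ((1+c)*(2*s+1+c))) by (apply Rmult_le_compat_l; lra).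
  lra.
- exists z. split; [|lra]. destruct Hz1 as [|E]; auto. subst z.
  unfold hh in Hz3. replace (s^3 + p*s) with (s*(s*s+p)) in Hz3 by ring. rewrite Hs2 in Hz3.
  lra.
Qed.

Lemma lam_spec p q e (hp : p < 0) : e <> q ->
  hh p q (lam p q e) = e /\ (lam p q e)^2 + p > 0 /\
  (q < e -> sqrt (-p) < lam p q e) /\ (e < q -> lam p q e < - sqrt (-p)).
Proof.
intros Hne. set (s := sqrt (-p)).
assert (Hs : 0 < s) by (apply sqrt_lt_R0; lra).
assert (Hs2 : s * s = -p) by (apply sqrt_sqrt; lra).
destruct (Rtotal_order e q) as [Hlt|[Heq|Hgt]]; [|contradiction|].
- destruct (pre_pos p q (2*q - e) hp) as [x [Hx1 Hx2]]; [lra|].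
  fold s in Hx1.
  assert (Hm : hh p q (-x) = e) by (unfold hh in *; lra).
  assert (Hsq : (-x)^2 + p > 0) by nra.
  rewrite <- Hm, (lam_h p q (-x) hp Hsq). rewrite Hm. repeat split; auto; lra.
- destruct (pre_pos p q e hp) as [x [Hx1 Hx2]]; [lra|].
  fold s in Hx1.
  assert (Hsq : x^2 + p > 0) by nra.
  rewrite <- Hx2, (lam_h p q x hp Hsq). rewrite Hx2. repeat split; auto; lra.
Qed.

Lemma hh_mono p q u v : 0 < u*v -> u^2+p > 0 -> v <= u -> hh p q v <= hh p q u.
Proof.
intros H1 H2 H3. unfold hh.
assert (E : u^3 + p*u + q - (v^3 + p*v + q) = (u-v)*((u^2+p) + u*v + v^2)) by ring.
assert (0 <= (u-v)*((u^2+p) + u*v + v^2)).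
{ apply Rmult_le_pos; [lra|]. pose proof (pow2_ge_0 v). lra. }
lra.
Qed.

Lemma lam_mono p q (hp : p < 0) x y : x < y -> lam p q x < lam p q y.
Proof.
intros Hxy. set (s := sqrt (-p)).
assert (Hs : 0 < s) by (apply sqrt_lt_R0; lra).
assert (Hs2 : s * s = -p) by (apply sqrt_sqrt; lra).
assert (Hsame : forall u v, hh p q u = x -> hh p q v = y -> 0 < u*v -> u^2+p>0 -> u < v).
{ intros u v Hu Hv Huv Hu2. destruct (Rlt_or_le u v) as [|Hle]; auto.
  pose proof (hh_mono p q u v Huv Hu2 Hle). lra. }
destruct (Rtotal_order x q) as [Hx|[Hx|Hx]];
destruct (Rtotal_order y q) as [Hy|[Hy|Hy]]; try lra.
- destruct (lam_spec p q x hp) as [A1 [A2 [_ A4]]]; [lra|].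
  destruct (lam_spec p q y hp) as [B1 [B2 [_ B4]]]; [lra|].
  specialize (A4 Hx). specialize (B4 Hy). fold s in A4, B4.
  apply Hsame; auto. nra.
- subst y. rewrite lam_q. destruct (lam_spec p q x hp) as [A1 [A2 [_ A4]]]; [lra|].
  specialize (A4 Hx). fold s in A4 |- *. lra.
- destruct (lam_spec p q x hp) as [A1 [A2 [_ A4]]]; [lra|].
  destruct (lam_spec p q y hp) as [B1 [B2 [B3 _]]]; [lra|].
  specialize (A4 Hx). specialize (B3 Hy). fold s in A4, B3. lra.
- subst x. rewrite lam_q. destruct (lam_spec p q y hp) as [B1 [B2 [B3 _]]]; [lra|].
  specialize (B3 Hy). fold s in B3 |- *. lra.
- destruct (lam_spec p q x hp) as [A1 [A2 [A3 _]]]; [lra|].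
  destruct (lam_spec p q y hp) as [B1 [B2 [B3 _]]]; [lra|].
  specialize (A3 Hx). specialize (B3 Hy). fold s in A3, B3.
  apply Hsame; auto. nra.
Qed.

Lemma lam_range p q (hp : p < 0) y :
  (exists eta : R, lam p q eta = y) <-> (y < - sqrt (- p) \/ sqrt (- p) <= y).
Proof.
set (s := sqrt (-p)).
assert (Hs : 0 < s) by (apply sqrt_lt_R0; lra).
assert (Hs2 : s * s = -p) by (apply sqrt_sqrt; lra).
split.
- intros [eta <-]. destruct (Rtotal_order eta q) as [H|[H|H]].
  + destruct (lam_spec p q eta hp) as [_ [_ [_ A]]]; [lra|]. left; auto.
  + subst. rewrite lam_q. right; unfold s; lra.
  + destruct (lam_spec p q eta hp) as [_ [_ [A _]]]; [lra|]. right; fold s in A |- *.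
    specialize (A H). lra.
- intros H. destruct (Req_dec y s) as [E|E].
  + exists q. rewrite lam_q. auto.
  + exists (hh p q y). apply lam_h; auto. replace (y^2) with (y*y) by ring.
    destruct H as [H|H].
    * assert (0 < (s - y)*(-s-y)) by (apply Rmult_lt_0_compat; lra). nra.
    * assert (0 < (y - s)*(y+s)) by (apply Rmult_lt_0_compat; lra). nra.
Qed.

Lemma lam_right p q (hp : p < 0) :
  filterlim (lam p q) (at_right q) (locally (lam p q q)).
Proof.
set (s := sqrt (-p)).
assert (Hs : 0 < s) by (apply sqrt_lt_R0; lra).
assert (Hs2 : s * s = -p) by (apply sqrt_sqrt; lra).
apply filterlim_locally. intros eps.
assert (Hd : 0 < 2*(s*s)*eps) by (pose proof (cond_pos eps); apply Rmult_lt_0_compat; nra).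
exists (mkposreal _ Hd). intros y Hy Hqy.
unfold ball in *; simpl in *; unfold AbsRing_ball, abs, minus, plus, opp in *; simpl in *.
rewrite lam_q. fold s.
destruct (lam_spec p q y hp) as [A1 [_ [A3 _]]]; [lra|].
specialize (A3 Hqy). fold s in A3. set (v := lam p q y) in *.
rewrite Rabs_pos_eq in Hy by lra. rewrite Rabs_pos_eq by lra.
unfold hh in A1.
assert (E : (v - s) * (v*(v+s)) = y - q) by (replace p with (-(s*s)) in A1 by lra; nra).
assert (2*(s*s) <= v*(v+s)) by nra.
destruct (Rlt_or_le (v + - s) eps) as [|Hge]; auto. exfalso.
assert (eps * (2*(s*s)) <= (v - s) * (v*(v+s))).
{ pose proof (cond_pos eps). apply Rmult_le_compat; nra. }
lra.
Qed.

Lemma lam_near p q (hp : p < 0) e0 e : e0 <> q -> Rabs (e - e0) < Rabs (e0 - q) ->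
  let x0 := lam p q e0 in let x := lam p q e in
  x0^2 + p > 0 /\ (x - x0) * (x^2 + x*x0 + x0^2 + p) = e - e0 /\
  x0^2 + p <= x^2 + x*x0 + x0^2 + p.
Proof.
intros Hne Hd x0 x.
set (s := sqrt (-p)).
assert (Hs : 0 < s) by (apply sqrt_lt_R0; lra).
destruct (lam_spec p q e0 hp Hne) as [A1 [A2 [A3 A4]]]. fold x0 in A1, A2, A3, A4.
assert (Hne' : e <> q).
{ intro E; subst e. rewrite Rabs_minus_sym in Hd. lra. }
destruct (lam_spec p q e hp Hne') as [B1 [B2 [B3 B4]]]. fold x in B1, B2, B3, B4.
assert (Hxx : 0 <= x * x0).
{ destruct (Rtotal_order e0 q) as [H|[H|H]]; [|contradiction|].
  - rewrite (Rabs_left (e0 - q)) in Hd by lra. assert (e < q).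
    { destruct (Rle_or_lt 0 (e - e0)); [rewrite Rabs_pos_eq in Hd by lra|rewrite Rabs_left in Hd by lra]; lra. }
    specialize (A4 H). specialize (B4 H0). fold s in A4, B4. nra.
  - rewrite (Rabs_pos_eq (e0 - q)) in Hd by lra. assert (q < e).
    { destruct (Rle_or_lt 0 (e - e0)); [rewrite Rabs_pos_eq in Hd by lra|rewrite Rabs_left in Hd by lra]; lra. }
    specialize (A3 H). specialize (B3 H0). fold s in A3, B3. nra. }
split; auto. split.
- unfold hh in A1, B1. rewrite <- A1, <- B1. ring.
- pose proof (pow2_ge_0 x). lra.
Qed.

Lemma lam_cont p q (hp : p < 0) e0 : e0 <> q -> continuity_pt (lam p q) e0.
Proof.
intros Hne eps Heps.
set (x0 := lam p q e0).
destruct (lam_near p q hp e0 e0 Hne) as [L0 _]. { rewrite Rminus_diag, Rabs_R0. apply Rabs_pos_lt. lra. }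
fold x0 in L0.
exists (Rmin (Rabs (e0 - q)) (eps * (x0^2+p))). split.
{ apply Rmin_pos. apply Rabs_pos_lt; lra. apply Rmult_lt_0_compat; lra. }
intros e [_ He]. simpl in He |- *. unfold R_dist in *.
assert (H1 : Rabs (e - e0) < Rabs (e0 - q)) by (eapply Rlt_le_trans; [apply He|apply Rmin_l]).
assert (H2 : Rabs (e - e0) < eps * (x0^2+p)) by (eapply Rlt_le_trans; [apply He|apply Rmin_r]).
destruct (lam_near p q hp e0 e Hne H1) as [_ [E D]]. fold x0 in E, D.
set (x := lam p q e) in *. set (Dx := x^2 + x*x0 + x0^2 + p) in *.
rewrite <- E, Rabs_mult, (Rabs_pos_eq Dx) in H2 by lra.
destruct (Rlt_or_le (Rabs (x - x0)) eps) as [|Hge]; auto. exfalso.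
assert (eps * (x0^2+p) <= Rabs (x - x0) * Dx) by (apply Rmult_le_compat; lra).
lra.
Qed.

Lemma lam_deriv p q (hp : p < 0) e0 : e0 <> q -> ex_derive (lam p q) e0.
Proof.
intros Hne.
set (x0 := lam p q e0).
destruct (lam_near p q hp e0 e0 Hne) as [L0 _]. { rewrite Rminus_diag, Rabs_R0. apply Rabs_pos_lt. lra. }
fold x0 in L0.
set (g := fun x => / (x^2 + x*x0 + x0^2 + p)).
assert (Hg : continuity_pt g x0).
{ unfold g. apply continuity_pt_inv.
  - apply derivable_continuous_pt. reg.
  - nra. }
assert (Hc : continuity_pt (comp g (lam p q)) e0).
{ apply continuity_pt_comp. apply lam_cont; auto. exact Hg. }
exists (g x0). apply is_derive_Reals.
intros eps Heps. destruct (Hc eps Heps) as [alp [Halp H]].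
assert (Hd : 0 < Rmin alp (Rabs (e0 - q))) by (apply Rmin_pos; [lra|apply Rabs_pos_lt; lra]).
exists (mkposreal _ Hd). intros h Hh0 Hh. simpl in Hh.
assert (H1 : Rabs (e0 + h - e0) < Rabs (e0 - q)).
{ replace (e0 + h - e0) with h by ring. eapply Rlt_le_trans; [apply Hh|apply Rmin_r]. }
destruct (lam_near p q hp e0 (e0+h) Hne H1) as [_ [E D]]. fold x0 in E, D.
set (x := lam p q (e0 + h)) in *.
assert (Q : (x - x0) / h = g x).
{ unfold g. replace (e0 + h - e0) with h in E by ring.
  assert (Dp : 0 < x^2 + x*x0 + x0^2 + p) by lra.
  assert (X : x - x0 = h / (x^2 + x*x0 + x0^2 + p)) by (rewrite <- E; field; lra).
  rewrite X. field. split; lra. }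
fold x0. rewrite Q.
specialize (H (e0 + h)). simpl in H. unfold R_dist, comp in H. fold x0 x in H.
apply H. split.
- split; [exact I|]. intro Z. apply Hh0. lra.
- replace (e0 + h - e0) with h by ring. eapply Rlt_le_trans; [apply Hh|apply Rmin_l].
Qed.

Theorem proposition3p4 (p q : R) (hp : p < 0) :
  (forall y : R,
      (exists eta : R, lam p q eta = y) <-> (y < - sqrt (- p) \/ sqrt (- p) <= y)) /\
  (forall eta : R, eta <> q -> ex_derive (lam p q) eta) /\
  filterlim (lam p q) (at_right q) (locally (lam p q q)) /\
  (forall x y : R, x < y -> lam p q x < lam p q y) /\
  (forall x y : R, lam p q x = lam p q y -> x = y).
Proof.
split; [intro y; apply lam_range; auto|].
split; [intros; apply lam_deriv; auto|].
split; [apply lam_right; auto|].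
split; [intros; apply lam_mono; auto|].
intros x y E. destruct (Rtotal_order x y) as [H|[H|H]]; auto.
- apply (lam_mono p q hp) in H. lra.
- apply (lam_mono p q hp) in H. lra.
Qed.
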